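(* Let $q$ be a prime power, $m,s\ge1$, $n=n_1+\dots+n_\ell$ with all $n_i>0$, and let $\mathcal{C}\subseteq\mathbb{F}_{q^m}^n$ be an $\mathbb{F}_{q^m}$-linear code of dimension $k$ and minimum sum-rank distance $d$ (w.r.t. the partition $(n_1,\dots,n_\ell)$), with parity-check matrix $\mathbf{H}=(\mathbf{H}^{(1)}\mid\dots\mid\mathbf{H}^{(\ell)})\in\mathbb{F}_{q^m}^{(n-k)\times n}$, $\mathbf{H}^{(i)}\in\mathbb{F}_{q^m}^{(n-k)\times n_i}$. Let $\mathbf{E}=(\mathbf{E}^{(1)}\mid\dots\mid\mathbf{E}^{(\ell)})\in\mathbb{F}_{q^m}^{s\times n}$ with $\mathbf{E}^{(i)}\in\mathbb{F}_{q^m}^{s\times n_i}$, $\operatorname{rk}_q(\mathbf{E}^{(i)})=t_i$, and sum-rank weight $t=\sum_it_i\le d-2$. Let $\mathbf{S}=\mathbf{H}\mathbf{E}^\top$, let $\mathbf{P}\in\mathbb{F}_{q^m}^{(n-k)\times(n-k)}$ be invertible with $\mathbf{P}\mathbf{S}$ in row-echelon form, and let $\mathbf{H}_{\mathrm{sub}}=(\mathbf{H}_{\mathrm{sub}}^{(1)}\mid\dots\mid\mathbf{H}_{\mathrm{sub}}^{(\ell)})$ be the submatrix of $\mathbf{P}\mathbf{H}$ formed by the rows corresponding to the zero rows of $\mathbf{P}\mathbf{S}$ (with $\mathbf{H}_{\mathrm{sub}}^{(i)}$ having $n_i$ columns). If $s\ge t$ and $\operatorname{rk}_{q^m}(\mathbf{E})=t$,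 then for all $i\in[1:\ell]$, $$\mathcal{R}_q(\mathbf{E}^{(i)})=\ker_r\big(\operatorname{ext}(\mathbf{H}_{\mathrm{sub}}^{(i)})\big)_q .$$
   Context: Fix an ordered basis $\mathbf{b}$ of $\mathbb{F}_{q^m}$ over $\mathbb{F}_q$; $\operatorname{ext}(\alpha)\in\mathbb{F}_q^m$ is the coordinate column vector of $\alpha\in\mathbb{F}_{q^m}$ w.r.t. $\mathbf{b}$, applied entrywise to matrices (an $a\times b$ matrix over $\mathbb{F}_{q^m}$ becomes an $am\times b$ matrix over $\mathbb{F}_q$). $\operatorname{rk}_q(\mathbf{X}):=\operatorname{rk}(\operatorname{ext}(\mathbf{X}))$ over $\mathbb{F}_q$; $\operatorname{rk}_{q^m}$ is the rank over $\mathbb{F}_{q^m}$. The sum-rank weight of $\mathbf{x}=(\mathbf{x}^{(1)}\mid\dots\mid\mathbf{x}^{(\ell)})$ is $\sum_i\operatorname{rk}_q(\mathbf{x}^{(i)})$, the sum-rank distance is the weight of the difference, and $d$ is the minimum sum-rank distance between distinct codewords. $\mathcal{R}_q(\mathbf{X})$ denotes the $\mathbb{F}_q$-row space of $\operatorname{ext}(\mathbf{X})$. For a matrix $\mathbf{M}$ over $\mathbb{F}_q$ with $N$ columns, $\ker_r(\mathbf{M})_q=\{\mathbf{v}\in\mathbb{F}_q^N:\mathbf{M}\mathbf{v}^\top=\mathbf{0}\}$. *)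

(* Defs.v *)
From HB Require Import structures.
From mathcomp Require Import all_boot all_order all_algebra all_field.
Set Implicit Arguments. Unset Strict Implicit. Unset Printing Implicit Defensive.
Import GRing.Theory.
Local Open Scope ring_scope.

(* F = F_q (any finite field), L = F_{q^m} a field extension of F,
   b an ordered F-basis of L (an m-tuple). *)
Section SumRank.
Variables (F : finFieldType) (L : fieldExtType F) (m : nat) (b : m.-tuple L).

(* ext X : entrywise expansion of X into coordinate column vectors w.r.t. b;
   an a x c matrix over L becomes an (a*m) x c matrix over F
   (row block i = coordinates of row i of X). *)
Definition ext a c (X : 'M[L]_(a, c)) : 'M[F]_(\sum_(i < a) m, c) :=
  mxcol (fun i : 'I_a => \matrix_(l < m, j < c) coord b l (X i j)).

Definition rkq a c (X : 'M[L]_(a, c)) : nat := \rank (ext X).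

Variables (ell : nat) (ns : 'I_ell -> nat).

Definition sr_weight (x : 'rV[L]_(\sum_i ns i)) : nat :=
  (\sum_(i < ell) rkq (submxrow x i))%N.

Definition sr_dist (x y : 'rV[L]_(\sum_i ns i)) : nat := sr_weight (x - y).

Definition min_sr_dist (C : pred 'rV[L]_(\sum_i ns i)) (d : nat) : Prop :=
  (exists x y, [/\ C x, C y, x != y & sr_dist x y = d]) /\
  (forall x y, C x -> C y -> x != y -> (d <= sr_dist x y)%N).

End SumRank.

Definition row_echelon (K : fieldType) r c (A : 'M[K]_(r, c)) : Prop :=
  forall i j : 'I_r, (i < j)%N -> row j A != 0 ->
    exists k : 'I_c, A i k != 0 /\ (forall k' : 'I_c, (k' <= k)%N -> A j k' = 0).

Definition zero_rows (K : fieldType) r c (A : 'M[K]_(r, c)) : {set 'I_r} :=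
  [set j | row j A == 0].

Definition sub_rows (K : fieldType) r c (Z : {set 'I_r}) (M : 'M[K]_(r, c))
  : 'M[K]_(#|Z|, c) := rowsub (fun k : 'I_#|Z| => enum_val k) M.

(* Main.v *)
Require Import Defs.
From HB Require Import structures.
From mathcomp Require Import all_boot all_order all_algebra all_field.
From mathcomp Require Import zify.
Import GRing.Theory.
Local Open Scope ring_scope.

Set Implicit Arguments. Unset Strict Implicit. Unset Printing Implicit Defensive.

Section Ext.
Variables (F : finFieldType) (L : fieldExtType F) (m : nat) (b : m.-tuple L).
Hypothesis hb : basis_of fullv b.

Local Notation "A ^i" := (map_mx (in_alg L) A) (at level 2).

Lemma coord_expand (x : L) : x = \sum_l coord b l x *: b`_l.
Proof. apply: coord_span; case/andP: hb => /eqP -> _; exact: memvf. Qed.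

Lemma coord_mul (y x : L) l :
  coord b l (y * x) = \sum_(l' < m) coord b l (y * b`_l') * coord b l' x.
Proof.
rewrite {1}(coord_expand x) mulr_sumr linear_sum; apply: eq_bigr => l' _.
by rewrite -scalerAr linearZ /= mulrC.
Qed.

Lemma ext_mulF a c p (X : 'M[L]_(a, c)) (w : 'M[F]_(c, p)) :
  ext b X *m w = ext b (X *m w^i).
Proof.
rewrite /ext mxcol_mul; apply: eq_mxcol => r; apply/matrixP => l j.
rewrite !mxE linear_sum; apply: eq_bigr => k _.
by rewrite !mxE mulr_algr linearZ /= mulrC.
Qed.

Lemma ext_eq0 a c (X : 'M[L]_(a, c)) : ext b X = 0 -> X = 0.
Proof.
move=> h; apply/matrixP => r j; rewrite mxE (coord_expand (X r j)).
apply: big1 => l _.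
have := congr1 (fun M => submxcol M r) h.
rewrite /ext mxcolK submxcol0 => /matrixP /(_ l j); rewrite !mxE => ->.
by rewrite scale0r.
Qed.

Lemma ext0 a c : ext b (0 : 'M[L]_(a, c)) = 0.
Proof.
rewrite /ext -(mxcol0 (p_ := fun _ : 'I_a => m)); apply: eq_mxcol => r.
by apply/matrixP => l j; rewrite !mxE linear0.
Qed.

Lemma extB a c (X Y : 'M[L]_(a, c)) : ext b (X - Y) = ext b X - ext b Y.
Proof.
rewrite /ext -mxcolB; apply: eq_mxcol => r.
by apply/matrixP => l j; rewrite !mxE linearB.
Qed.

Lemma ext_sub_mul a' a c (Y : 'M[L]_(a', a)) (X : 'M[L]_(a, c)) :
  (ext b (Y *m X) <= ext b X)%MS.
Proof.
have -> : ext b (Y *m X) =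
  \mxblock_(r', r) (\matrix_(l < m, l' < m) coord b l (Y r' r * b`_l'))
   *m ext b X.
  rewrite /ext mul_mxblock_mxrow; apply: eq_mxcol => r'.
  apply/matrixP => l j; rewrite !mxE summxE linear_sum.
  apply: eq_bigr => r _; rewrite !mxE; apply: (etrans (coord_mul _ _ _)).
  by apply: eq_bigr => l' _; rewrite !mxE.
exact: submxMl.
Qed.


Lemma ext_rowF n (v : 'rV[F]_n) : ext b v^i = ext b (1%:M : 'M[L]_1) *m v.
Proof. by rewrite ext_mulF mul1mx. Qed.

Lemma rank_ext_rowF n (v : 'rV[F]_n) : (\rank (ext b v^i) <= 1)%N.
Proof. rewrite ext_rowF; exact: leq_trans (mxrankM_maxr _ _) (rank_leq_row v). Qed.

Lemma sub_ext_rowF n (v : 'rV[F]_n) : (v <= ext b v^i)%MS.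
Proof.
have [l hl] : exists l, coord b l 1 != 0.
  case: (pickP (fun l => coord b l 1 != 0)) => [l hl|h0]; first by exists l.
  have h1 := coord_expand 1; rewrite big1 in h1; last first.
    by move=> l _; have := h0 l => /negbFE /eqP ->; rewrite scale0r.
  by move/eqP: h1; rewrite oner_eq0.
have hsub : (row l (submxcol (ext b v^i) ord0) <= ext b v^i)%MS.
  apply: submx_trans (row_sub _ _) _.
  by rewrite /submxcol rowsubE; apply: submxMl.
move: hsub; rewrite ext_rowF -submxcol_mul /ext mxcolK row_mul.
have -> : row l (\matrix_(l0 < m, j < 1) coord b l0 ((1%:M : 'M[L]_1) ord0 j))
   = (coord b l 1)%:M.
  by apply/matrixP => i j; rewrite !ord1 !mxE eqxx mulr1n.
rewrite mul_scalar_mx => h.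
by have := scalemx_sub (coord b l 1)^-1 h; rewrite scalerA mulVf // scale1r.
Qed.

End Ext.

Section Gen.
Variable K : fieldType.

Lemma echelon_ker r c (A : 'M[K]_(r, c)) (y : 'rV[K]_r) :
  row_echelon A -> y *m A = 0 -> forall j, row j A != 0 -> y 0 j = 0.
Proof.
move=> hA hy j0 hj0; apply/eqP/negPn/negP => hy0.
pose P := fun j : 'I_r => (y 0 j != 0) && (row j A != 0).
have P0 : P j0 by rewrite /P hy0 hj0.
case: (arg_minnP (fun j : 'I_r => (j : nat)) P0) => j /andP[yj rj] jmin.
have [k0 hk0] : exists k, A j k != 0.
  case: (pickP (fun k => A j k != 0)) => [k hk|h0]; first by exists k.
  by case/eqP: rj; apply/rowP => k; rewrite !mxE; apply/eqP/negbFE/h0.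
case: (@arg_minnP _ k0 (fun k => A j k != 0) (fun k : 'I_c => (k : nat)) hk0) => kp hkp kmin.
have := congr1 (fun M : 'M[K]_(1, c) => M 0 kp) hy; rewrite !mxE (bigD1 j) //= big1.
  by rewrite addr0 => /eqP; rewrite mulf_eq0 (negbTE yj) (negbTE hkp).
move=> i hij; case: (ltngtP i j) => hlt; last by case/eqP: hij; apply: val_inj.
- have : ~~ P i by apply/negP => /jmin; rewrite leqNgt hlt.
  rewrite /P negb_and !negbK => /orP[/eqP -> | /eqP ri]; first by rewrite mul0r.
  by have := congr1 (fun M : 'rV[K]_c => M 0 kp) ri; rewrite !mxE => ->; rewrite mulr0.
- have [ri0|ri] := eqVneq (row i A) 0.
    by have := congr1 (fun M : 'rV[K]_c => M 0 kp) ri0; rewrite !mxE => ->; rewrite mulr0.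
  have [k [hk1 hk2]] := hA j i hlt ri.
  by rewrite hk2 ?mulr0 // kmin.
Qed.

Lemma colspace r c (A : 'M[K]_(r, c)) (u : 'cV[K]_r) :
  (forall y : 'rV[K]_r, y *m A = 0 -> y *m u = 0) ->
  exists w : 'cV[K]_c, u = A *m w.
Proof.
move=> h.
have hk : kermx A *m u = 0.
  apply/row_matrixP => i; rewrite row_mul row0; apply: h.
  by rewrite -row_mul mulmx_ker row0.
have hsub : (kermx A <= kermx (row_mx A u))%MS.
  by apply/sub_kermxP; rewrite mul_mx_row mulmx_ker hk row_mx0.
have hr := mxrankS hsub; rewrite !mxrank_ker in hr.
have hle : (\rank (row_mx A u) <= r)%N by apply: rank_leq_row.
have hAu : (A^T <= A^T + u^T)%MS by apply: addsmxSl.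
have := mxrank_leqif_sup hAu.
rewrite addsmxE -tr_row_mx !mxrank_tr.
have hge : (\rank A <= \rank (row_mx A u))%N.
  by rewrite -mxrank_tr -[X in (_ <= X)%N]mxrank_tr tr_row_mx -addsmxE mxrankS.
have -> : \rank (row_mx A u) = \rank A by apply/eqP; rewrite eqn_leq hge andbT; lia.
case => _ /esym; rewrite eqxx addsmx_sub => /andP[_ /submxP [D hD]].
by exists D^T; rewrite -[u]trmxK hD trmx_mul trmxK.
Qed.

Lemma rank_sum_le I (rs : seq I) (P : pred I) n (B : I -> 'M[K]_n) :
  (\rank (\sum_(i <- rs | P i) B i)%MS <= \sum_(i <- rs | P i) \rank (B i))%N.
Proof.
elim/big_ind2: _ => //; first by rewrite mxrank0.
move=> x1 x2 y1 y2 h1 h2.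
exact: leq_trans (mxrank_adds_leqif _ _).1 (leq_add h1 h2).
Qed.

Lemma rank_mxcol_le n (p_ : 'I_n -> nat) c (X : forall i, 'M[K]_(p_ i, c)) :
  (\rank (\mxcol_i X i) <= \sum_i \rank (X i))%N.
Proof.
have h := @rank_sum_le _ (index_enum 'I_n) xpredT _ (fun i => <<X i>>%MS).
apply: leq_trans _ (leq_trans h _).
  apply: mxrankS; apply/row_subP => k; rewrite row_mxcol.
  apply: submx_trans (row_sub _ _) _.
  by apply: (sumsmx_sup (tagnat.sig1 k)) => //; rewrite genmxE.
by apply: leq_sum => i _; rewrite mxrank_gen.
Qed.

Lemma mul_tr_blocks n (q_ : 'I_n -> nat) a a' (A : 'M[K]_(a, \sum_i q_ i))
   (B : 'M[K]_(a', \sum_i q_ i)) :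
  A *m B^T = \sum_j submxrow A j *m (submxrow B j)^T.
Proof.
by rewrite -[A]submxrowK -[B]submxrowK tr_mxrow mul_mxrow_mxcol !submxrowK.
Qed.

End Gen.

Lemma mul_tr_blockdiag (K : fieldType) n (q_ : 'I_n -> nat) p a
  (A : 'M[K]_(a, \sum_i q_ i)) (G : forall j, 'M[K]_(p, q_ j)) i :
  submxrow (q_ := fun _ : 'I_n => p)
    (A *m (mxblock (p_ := fun _ : 'I_n => p) (q_ := q_)
             (fun i0 j => if i0 == j then G j else 0))^T) i
  = submxrow A i *m (G i)^T.
Proof.
rewrite -[A]submxrowK tr_mxblock mul_mxrow_mxblock mxrowK.
apply: (etrans (mxrowK _ _)).
rewrite (bigD1 i) //= eqxx big1 ?addr0 // => j hj.
by rewrite eq_sym (negbTE hj) trmx0 mulmx0.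
Qed.

Unset Implicit Arguments. Set Strict Implicit. Set Printing Implicit Defensive.

Theorem theorem1
  (F : finFieldType) (L : fieldExtType F) (m : nat) (b : m.-tuple L)
  (hb : basis_of fullv b)
  (ell : nat) (ns : 'I_ell -> nat) (hns : forall i, (0 < ns i)%N)
  (k d s : nat) (hs : (0 < s)%N) (hk : (k <= \sum_i ns i)%N)
  (Hb : forall i : 'I_ell, 'M[L]_(\sum_i ns i - k, ns i))
  (hH : \rank (mxrow Hb) = (\sum_i ns i - k)%N)
  (hd : min_sr_dist b (fun x => mxrow Hb *m x^T == 0) d)
  (Eb : forall i : 'I_ell, 'M[L]_(s, ns i))
  (ht : ((\sum_(i < ell) rkq b (Eb i)) + 2 <= d)%N)
  (P : 'M[L]_(\sum_i ns i - k)) (hP : P \in unitmx)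
  (hPS : row_echelon (P *m (mxrow Hb *m (mxrow Eb)^T)))
  (hst : (\sum_(i < ell) rkq b (Eb i) <= s)%N)
  (hrk : \rank (mxrow Eb) = (\sum_(i < ell) rkq b (Eb i))%N) :
  let Hsub := sub_rows (zero_rows (P *m (mxrow Hb *m (mxrow Eb)^T))) (P *m mxrow Hb) in
  forall (i : 'I_ell) (v : 'rV[F]_(ns i)),
    (v <= ext b (Eb i))%MS = (ext b (submxrow Hsub i) *m v^T == 0).
Proof.
move=> Hsub.
set H := mxrow Hb; set E := mxrow Eb; set S' := P *m (H *m E^T).
set Z := zero_rows S'.
set t := (\sum_(i < ell) rkq b (Eb i))%N.
have hHsubE : Hsub *m E^T = 0.
  rewrite /Hsub /sub_rows mul_rowsub_mx; apply/row_matrixP => kk.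
  rewrite row_rowsub row0 -mulmxA.
  by have := enum_valP kk; rewrite /Z /zero_rows inE => /eqP.
have hcol : forall u : 'cV_(\sum_i ns i), Hsub *m u = 0 ->
    exists w : 'cV_s, H *m u = H *m (E^T *m w).
  move=> u hu.
  have [w hw] : exists w : 'cV_s, P *m H *m u = S' *m w.
    apply: colspace => y hy.
    rewrite mulmx_sum_row; apply: big1 => j _.
    have [hj|hj] := eqVneq (row j S') 0.
      have hjZ : j \in Z by rewrite /Z /zero_rows inE hj.
      have hr : row j (P *m H) *m u = 0.
        have h2 := congr1 (row (enum_rank_in hjZ j)) hu.
        rewrite /Hsub /sub_rows row_mul row_rowsub (enum_rankK_in hjZ hjZ) row0 in h2.
        exact: h2.
      by rewrite row_mul hr scaler0.
    by rewrite (echelon_ker hPS hy hj) scale0r.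
  exists w.
  have : P *m (H *m u) = P *m (H *m (E^T *m w)) by rewrite mulmxA hw /S' !mulmxA.
  by move/(congr1 (mulmx (invmx P))); rewrite !mulKmx.
move=> i v.
have hext : forall (a : nat) (X : 'M[L]_(a, ns i)),
    (ext b X *m v^T == 0) = (X *m (map_mx (in_alg L) v)^T == 0).
  move=> a X; rewrite ext_mulF map_trmx.
  apply/eqP/eqP => h; first exact: (ext_eq0 hb h).
  by rewrite h ext0.
rewrite hext.
apply/idP/idP.
- move=> hv.
  pose p := (\sum_(r < s) m)%N.
  pose G j : 'M[L]_(p, ns j) := map_mx (in_alg L) (ext b (Eb j)).
  pose Y : 'M[L]_(s, p) :=
    mxrow (q_ := fun _ : 'I_s => m) (fun r => \matrix_(a < s, l < m) ((a == r)%:R * b`_l)).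
  have hYG : forall j, Y *m G j = Eb j.
    move=> j.
    have -> : G j = \mxcol_(r < s) (\matrix_(l < m, c0 < ns j) (coord b l (Eb j r c0))%:A).
      by apply/matrixP => ? ?; rewrite !mxE.
    rewrite mul_mxrow_mxcol; apply/matrixP => a c; rewrite summxE (bigD1 a) //= big1 ?addr0.
      rewrite mxE [RHS](coord_expand hb); apply: eq_bigr => l _.
      by rewrite !mxE eqxx mul1r mulr_algr.
    move=> r hr; rewrite mxE big1 // => l _.
    by rewrite !mxE eq_sym (negbTE hr) mul0r mul0r.
  pose Gb := mxblock (p_ := fun _ : 'I_ell => p) (q_ := ns)
     (fun i0 j => if i0 == j then G j else 0).
  have hE : E = mxrow (q_ := fun _ : 'I_ell => p) (fun _ => Y) *m Gb.
    rewrite mul_mxrow_mxblock /E; apply/eq_mxrow => j.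
    rewrite (bigD1 j) //= eqxx hYG big1 ?addr0 // => i0 hi0.
    by rewrite (negbTE hi0) mulmx0.
  have hrG : (\rank Gb <= t)%N.
    rewrite /Gb mxblockEv; apply: leq_trans (rank_mxcol_le _) _.
    apply: leq_sum => i0 _.
    rewrite -mxrank_tr tr_mxrow; apply: leq_trans (rank_mxcol_le _) _.
    rewrite (bigD1 i0) //= eqxx big1 ?addn0.
      by rewrite mxrank_tr mxrank_map.
    by move=> j hj; rewrite eq_sym (negbTE hj) trmx0 mxrank0.
  have hEG : (E <= Gb)%MS by rewrite hE submxMl.
  have hGE : (Gb <= E)%MS.
    case: (mxrank_leqif_sup hEG) => _ <-.
    by rewrite eqn_leq (mxrankS hEG) /E hrk hrG.
  have [X hX] := submxP hGE.
  have hzero : Hsub *m Gb^T = 0 by rewrite hX trmx_mul (mulmxA Hsub) hHsubE mul0mx.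
  have hGi : submxrow Hsub i *m (G i)^T = 0.
    have := congr1 (fun M => submxrow (q_ := fun _ : 'I_ell => p) M i) hzero.
    by rewrite /Gb mul_tr_blockdiag submxrow0.
  have : (map_mx (in_alg L) v <= G i)%MS by rewrite /G map_submx.
  case/submxP => D0 ->.
  by rewrite trmx_mul mulmxA hGi mul0mx.
- move/eqP => hv.
  pose D (i j : 'I_ell) : 'M[L]_(ns i, ns j) :=
    \matrix_(a, c) ((i == j) && (a == c :> nat))%:R.
  pose x : 'rV[L]_(\sum_i ns i) := \mxrow_j (map_mx (in_alg L) v *m D i j).
  have hxi : submxrow x i = map_mx (in_alg L) v.
    rewrite mxrowK; have -> : D i i = 1%:M by apply/matrixP => a c; rewrite !mxE eqxx.
    by rewrite mulmx1.
  have hxj : forall j, j != i -> submxrow x j = 0.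
    move=> j hji; rewrite mxrowK.
    have -> : D i j = 0 by apply/matrixP => a c; rewrite !mxE eq_sym (negbTE hji).
    by rewrite mulmx0.
  have hHx : Hsub *m x^T = 0.
    rewrite (mul_tr_blocks (q_ := ns) Hsub x) [X in X = 0](bigD1 i) //= hxi hv [X in _ + X = 0]big1 ?addr0 // => j hj.
    by rewrite hxj // trmx0 mulmx0.
  have [w hw] := hcol _ hHx.
  pose c := x - w^T *m E.
  have hc : H *m c^T = 0.
    rewrite /c raddfB /= trmx_mul trmxK mulmxBr hw; exact: subrr.
  have hcj : forall j, submxrow c j = submxrow x j - w^T *m Eb j.
    by move=> j; rewrite /c /E submxrowB -mul_submxrow (mxrowK (q_ := ns) Eb).
  have hwt : (sr_weight b c <= t + 1)%N.
    rewrite /sr_weight.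
    apply: (@leq_trans (\sum_j (rkq b (submxrow x j) + rkq b (Eb j)))).
      apply: leq_sum => j _; rewrite hcj /rkq extB.
      apply: leq_trans (mxrank_add _ _) _; rewrite mxrank_opp leq_add2l.
      exact: mxrankS (ext_sub_mul hb _ _).
    rewrite big_split /= addnC leq_add2l (bigD1 i) //= big1 ?addn0.
      by rewrite hxi; exact: rank_ext_rowF.
    by move=> j hj; rewrite hxj // /rkq ext0 mxrank0.
  have hc0 : c = 0.
    apply/eqP; apply/negPn/negP => hc0.
    have hle : (d <= sr_dist b c 0)%N.
      by apply: hd.2 => //=; rewrite ?hc ?trmx0 ?mulmx0 eqxx.
    move: hle; rewrite /sr_dist subr0 => hle.
    have := leq_trans hle hwt; lia.
  have hvi : map_mx (in_alg L) v = w^T *m Eb i.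
    have := congr1 (fun M => submxrow M i) hc0.
    by rewrite hcj hxi submxrow0 => /eqP; rewrite subr_eq0 => /eqP.
  apply: submx_trans (sub_ext_rowF hb v) _.
  by rewrite hvi; apply: (ext_sub_mul hb (w^T) (Eb i)).
Qed.
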